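(* Let $d\ge3$. There exists $\varepsilon>0$ such that for every $L_0\ge1$, every $n\ge1$, every $x\in\mathcal L_n\cap F$ and every $\mathcal M\in\Lambda^F_{n,x}$, $$\sup_{z\in\mathbb Z^d}\mathbb E_z\Big[\exp\Big(\varepsilon\sum_{i\ge0}\frac{\tau_i}{L_i^2\,3^i}\Big)\Big]<\infty,$$ where, for a simple random walk $(S_k)_{k\ge0}$ started at $z$ under $\mathbb P_z$, $\tau_i=\sum_{k\ge0}\mathbf 1\{S_k\in\mathcal S_i\}$ is its total time spent in $\mathcal S_i$.
   Context: $|\cdot|$ is the $\ell^\infty$ norm on $\mathbb Z^d$. Embeddings: given $L_0\ge1$, $L_n=L_0 6^n$ and $\mathcal L_n=L_n\mathbb Z^d$. $T_{(k)}=\{1,2\}^k$ ($T_{(0)}=\{\emptyset\}$), $T_n=\bigcup_{k=0}^nT_{(k)}$; for $m\in T_{(k)}$, $m_1,m_2\in T_{(k+1)}$ are $m$ with $1$, resp. $2$, appended. A proper embedding of $T_n$ with root $x$ is a map $\mathcal M:T_n\to\mathbb Z^d$ with $\mathcal M(\emptyset)=x$, $\mathcal M(m)\in\mathcal L_{n-k}$ for $m\in T_{(k)}$, and $|\mathcal M(m_1)-\mathcal M(m)|=L_{n-k}$, $|\mathcal M(m_2)-\mathcal M(m)|=2L_{n-k}$ for $m\in T_{(k)}$, $k<n$. $F=\mathbb Z^2\times\{0\}^{d-2}$; $\Lambda^F_{n,x}$ is the set of proper embeddings of $T_n$ with root $x$ taking values in $F$. Shells: $Q(y,r)=\{w:|w-y|\le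 r\}$. Let $U_i=\bigcup_{m\in T_{(n-i)}}Q(\mathcal M(m),L_{i+1})$ for $0\le i\le n$ and $U_i=Q(x,L_{i+1})$ for $i>n$; set $\mathcal S_0=U_0$ and $\mathcal S_i=U_i\setminus U_{i-1}$ for $i\ge1$ (these form a partition of $\mathbb Z^d$). *)

(* Defs.v *)
From Stdlib Require Import Reals.
From HB Require Import structures.
From mathcomp Require Import all_boot all_order all_algebra.
From mathcomp Require Import Rstruct.
Set Implicit Arguments. Unset Strict Implicit. Unset Printing Implicit Defensive.
Import Order.TTheory GRing.Theory Num.Theory.

Definition pt (d : nat) := 'I_d -> int.

Definition dist {d : nat} (y w : pt d) : nat := \max_(j < d) absz (y j - w j)%R.

Definition Lk (L0 k : nat) : nat := L0 * 6 ^ k.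

Definition in_lat {d : nat} (L0 k : nat) (y : pt d) : bool :=
  [forall j : 'I_d, ((Lk L0 k)%:Z %| y j)%Z].

Definition in_F {d : nat} (y : pt d) : bool := [forall j : 'I_d, (1 < j) ==> (y j == 0%R)].

(* Tree vertices m in {1,2}^k are encoded as seq bool (false = 1, true = 2);
   m_1 = rcons m false, m_2 = rcons m true. *)
Definition proper_emb {d : nat} (L0 n : nat) (x : pt d) (M : seq bool -> pt d) : Prop :=
  M [::] = x /\
  (forall m : seq bool, size m <= n -> in_lat L0 (n - size m) (M m)) /\
  (forall m : seq bool, size m < n ->
      dist (M (rcons m false)) (M m) = Lk L0 (n - size m) /\
      dist (M (rcons m true)) (M m) = 2 * Lk L0 (n - size m)).

Definition in_LambdaF {d : nat} (L0 n : nat) (x : pt d) (M : seq bool -> pt d) : Prop :=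
  proper_emb L0 n x M /\ (forall m : seq bool, size m <= n -> in_F (M m)).

Definition in_U {d : nat} (L0 n : nat) (x : pt d) (M : seq bool -> pt d) (i : nat) (y : pt d)
  : bool :=
  if i <= n then [exists t : (n - i).-tuple bool, dist y (M (tval t)) <= Lk L0 i.+1]
  else dist y x <= Lk L0 i.+1.

Definition in_shell {d : nat} (L0 n : nat) (x : pt d) (M : seq bool -> pt d) (i : nat) (y : pt d)
  : bool :=
  if i is i'.+1 then in_U L0 n x M i y && ~~ in_U L0 n x M i' y
  else in_U L0 n x M 0 y.

Definition step_vec {d : nat} (s : 'I_d * bool) : pt d :=
  fun j => if j == s.1 then (if s.2 then 1%R else (-1)%R) else 0%R.

Definition pos {d : nat} (z : pt d) (s : seq ('I_d * bool)) (k : nat) : pt d :=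
  fun j => (z j + \sum_(st <- take k s) step_vec st j)%R.

Definition tau {d : nat} (L0 n : nat) (x : pt d) (M : seq bool -> pt d) (i : nat)
  (z : pt d) (N : nat) (s : seq ('I_d * bool)) : nat :=
  count (fun k => in_shell L0 n x M i (pos z s k)) (iota 0 N).

(* E_z of G(S_0, ..., S_{N-1}) for simple random walk: uniform average over the
   (2d)^N step sequences of length N. *)
Definition srw_E (d : nat) (N : nat) (G : seq ('I_d * bool) -> R) : R :=
  (\sum_(s : N.-tuple ('I_d * bool)) G (tval s) / ((2 * d) ^ N)%:R)%R.

Definition trunc_functional {d : nat} (L0 n : nat) (x : pt d) (M : seq bool -> pt d)
  (eps : R) (z : pt d) (N I : nat) (s : seq ('I_d * bool)) : R :=
  exp (eps * \sum_(i < I) (tau L0 n x M i z N s)%:R / ((Lk L0 i) ^ 2 * 3 ^ i)%:R)%R.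

(* Main.v *)
Require Import Defs.
From Stdlib Require Import Reals.
From HB Require Import structures.
From mathcomp Require Import all_boot all_order all_algebra.
From mathcomp Require Import Rstruct.
Import Order.TTheory GRing.Theory Num.Theory.
From Stdlib Require Import FunctionalExtensionality.
From mathcomp Require Import ring lra zify.

Local Open Scope ring_scope.
Bind Scope ring_scope with R.
Local Notation dist := Defs.dist.
Local Notation pos := Defs.pos.

Definition q4 (s : R) : R := Num.sqrt (Num.sqrt s).
Arguments q4 s%_ring_scope.
Lemma q4_ge0 s : 0 <= q4 s. Proof. exact: sqrtr_ge0. Qed.
Lemma q4_gt0 s : 0 < s -> 0 < q4 s. Proof. by move=> h; rewrite /q4 !sqrtr_gt0. Qed.
Lemma q4_pow4 s : 0 <= s -> q4 s ^+ 4 = s.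
Proof. move=> h; rewrite /q4 (_ : 4 = 2 * 2)%N // exprM !sqr_sqrtr ?sqrtr_ge0 //. Qed.
Lemma q4_le s1 s2 : 0 <= s2 -> s1 <= s2 -> q4 s1 <= q4 s2.
Proof. by move=> h1 h2; rewrite /q4 ler_sqrt ?sqrtr_ge0 // ler_sqrt. Qed.
Lemma q4M a b : 0 <= a -> q4 (a*b) = q4 a * q4 b.
Proof. by move=> ha; rewrite /q4 sqrtrM // sqrtrM // sqrtr_ge0. Qed.
Lemma q4_sqr a : 0 <= a -> q4 (a^+2) = Num.sqrt a.
Proof. by move=> ha; rewrite /q4 sqrtr_sqr ger0_norm. Qed.

Lemma g_pos (x : R) : 99/100 <= x ->
  (x^+3+2*x^+2+3*x+4)/4 <= (21/128) * x*(x^+3+x^+2+x+1)^+2.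
Proof. move=> hx. set h := x - 99/100.
 have -> : x = 99/100 + h by rewrite /h addrC subrK.
 have h0 : 0 <= h by rewrite /h; lra.
 have h2 : 0 <= h^+2 by rewrite exprn_ge0.
 have h3 : 0 <= h^+3 by rewrite exprn_ge0.
 have h4 : 0 <= h^+4 by rewrite exprn_ge0.
 have h5 : 0 <= h^+5 by rewrite exprn_ge0.
 have h6 : 0 <= h^+6 by rewrite exprn_ge0.
 have h7 : 0 <= h^+7 by rewrite exprn_ge0.
 clearbody h. lra. Qed.

Lemma key_poly (x : R) : 99/100 <= x -> 1 <= x - x*(x^+4-1)/4 + (21/128)*x*(x^+4-1)^+2.
Proof. move=> hx; have hg := g_pos x hx.
 have E : x - x*(x^+4-1)/4 + (21/128)*x*(x^+4-1)^+2 - 1 =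
   (x-1)^+2 * ((21/128)*x*(x^+3+x^+2+x+1)^+2 - (x^+3+2*x^+2+3*x+4)/4) by field.
 rewrite -subr_ge0 E mulr_ge0 ?sqr_ge0 // subr_ge0 //. Qed.

Lemma x_ge (x : R) : 0 < x -> 99/100 <= x^+4 -> 99/100 <= x.
Proof. move=> h0 h4. rewrite leNgt; apply/negP => hlt.
 have : x^+4 <= (99/100)^+4 by rewrite lerXn2r ?nnegrE //; lra.
 lra. Qed.

Lemma nb_bound (v w : R) : 0 < v -> 0 < w -> 99/100 * v^+4 <= w^+4 ->
  w^-1 <= v^-1 - (w^+4 - v^+4)/(4 * v^+5) + (21/128) * (w^+4 - v^+4)^+2 / v^+9.
Proof. move=> hv hw h4.
 set x := w / v. have hx : 0 < x by rewrite divr_gt0.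
 have hw' : w = x * v by rewrite /x divfK // gt_eqF.
 have hx4 : 99/100 <= x^+4.
   by move: h4; rewrite hw' exprMn -ler_pdivlMr ?exprn_gt0 // mulfK // gt_eqF // exprn_gt0.
 have hk := key_poly x (x_ge x hx hx4).
 rewrite hw'.
 have vne : v != 0 by rewrite gt_eqF.
 have xne : x != 0 by rewrite gt_eqF.
 have -> : v^-1 - ((x*v)^+4 - v^+4)/(4 * v^+5) + (21/128) * ((x*v)^+4 - v^+4)^+2 / v^+9
    = v^-1 * x^-1 * (x - x*(x^+4-1)/4 + (21/128)*x*(x^+4-1)^+2).
 by field; rewrite xne vne.
 rewrite invfM [_ * x^-1]mulrC -[X in X <= _]mulr1 ler_wpM2l // ?mulr_ge0 ?invr_ge0 ?ltW //.
Qed.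

Lemma nb_bound' (v w u : R) : 0 < v -> 0 < w -> w^+4 = v^+4 + u -> 99/100 * v^+4 <= w^+4 ->
  w^-1 <= v^-1 - u * (v^-1)^+5 / 4 + 21/128 * u^+2 * (v^-1)^+9.
Proof. move=> hv hw hu h4. have := nb_bound v w hv hw h4.
 have -> : w^+4 - v^+4 = u by rewrite hu addrC addKr.
 have vne : v != 0 by rewrite gt_eqF.
 have -> : v^-1 - u/(4 * v^+5) + (21/128) * u^+2 / v^+9 =
    v^-1 - u * (v^-1)^+5 / 4 + 21/128 * u^+2 * (v^-1)^+9 by field; rewrite vne.
 done.
Qed.

Lemma sq_le_sum (d : nat) (a : 'I_d -> R) j : a j ^+ 2 <= \sum_k a k ^+ 2.
Proof. rewrite (bigD1 j) //= lerDl sumr_ge0 // => k _; exact: sqr_ge0. Qed.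

Lemma nbsum (d : nat) (a : 'I_d -> R) (A : R) : (3 <= d)%N -> 10000 <= A ->
  \sum_(j < d) ((q4 (A + \sum_k a k ^+ 2 + (1 + 2 * a j)))^-1
                + (q4 (A + \sum_k a k ^+ 2 + (1 - 2 * a j)))^-1)
   <= d%:R * 2 * ((q4 (A + \sum_k a k ^+ 2))^-1 - ((q4 (A + \sum_k a k ^+ 2))^-1)^+5 / 32).
Proof. move=> hd hA.
 have ht : 0 <= \sum_k a k ^+ 2 by rewrite sumr_ge0 // => k _; exact: sqr_ge0.
 have hall : forall j, a j ^+ 2 <= \sum_k a k ^+ 2 by move=> j; exact: sq_le_sum.
 move tdef: (\sum_k a k ^+ 2) ht hall => t ht hall.
 set v := q4 (A + t).
 have hv : 0 < v by apply: q4_gt0; lra.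
 have hv4 : v ^+ 4 = A + t by rewrite q4_pow4 //; lra.
 set iv := v^-1.
 have hiv : 0 <= iv by rewrite invr_ge0 ltW.
 have hiv9 : 0 <= iv ^+ 9 by rewrite exprn_ge0.
 have iv5 : iv ^+ 5 = (A + t) * iv ^+ 9.
   by rewrite -hv4 /iv (_ : 9 = 4 + 5)%N // exprD mulrA -exprMn mulfV ?expr1n ?mul1r // gt_eqF.
 have step : forall j, (q4 (A + t + (1 + 2 * a j)))^-1 + (q4 (A + t + (1 - 2 * a j)))^-1
    <= (2 * iv - iv^+5 / 2 + 2 * (21/128) * iv^+9) + (8 * (21/128) * iv^+9) * a j ^+ 2.
 { move=> j. have haj := hall j.
   have hp : 99/100 * (A + t) <= A + t + (1 + 2 * a j).
   { have : 0 <= (a j + 100) ^+ 2 by exact: sqr_ge0. lra. }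
   have hm : 99/100 * (A + t) <= A + t + (1 - 2 * a j).
   { have : 0 <= (a j - 100) ^+ 2 by exact: sqr_ge0. lra. }
   have p1 : 0 < A + t + (1 + 2 * a j) by lra.
   have p2 : 0 < A + t + (1 - 2 * a j) by lra.
   have b1 := nb_bound' v (q4 (A + t + (1 + 2 * a j))) (1 + 2 * a j) hv (q4_gt0 _ p1).
   have b2 := nb_bound' v (q4 (A + t + (1 - 2 * a j))) (1 - 2 * a j) hv (q4_gt0 _ p2).
   rewrite hv4 q4_pow4 ?(ltW p1) // in b1.
   rewrite hv4 q4_pow4 ?(ltW p2) // in b2.
   have {b1}b1 := b1 erefl hp. have {b2}b2 := b2 erefl hm.
   rewrite -/iv in b1 b2.
   have -> : (2 * iv - iv^+5 / 2 + 2 * (21/128) * iv^+9) + (8 * (21/128) * iv^+9) * a j ^+ 2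
     = (iv - (1 + 2 * a j) * iv ^+ 5 / 4 + 21 / 128 * (1 + 2 * a j) ^+ 2 * iv ^+ 9)
     + (iv - (1 - 2 * a j) * iv ^+ 5 / 4 + 21 / 128 * (1 - 2 * a j) ^+ 2 * iv ^+ 9) by field.
   exact: lerD. }
 apply: le_trans; first exact: (ler_sum _ (fun j _ => step j)).
 rewrite big_split /= sumr_const card_ord -mulr_sumr.
 rewrite -/iv iv5.
 have hD : 3 <= (d%:R : R) by rewrite (ler_nat R 3 d).
 set D := (d%:R : R) in hD *.
 set P := iv ^+ 9 in hiv9 *.
 have h1 : 0 <= (D - 3) * t by rewrite mulr_ge0 //; lra.
 have h2 : 0 <= D * (A - 1) by rewrite mulr_ge0 //; lra.
 have br : - D * (A + t) / 2 + 2 * (21/128) * D + 8 * (21/128) * t + D * (A + t) / 16 <= 0 by lra.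
 have : P * (- D * (A + t) / 2 + 2 * (21/128) * D + 8 * (21/128) * t + D * (A + t) / 16) <= 0
   by rewrite mulr_ge0_le0.
 rewrite tdef -(mulr_natl _ d) -/D. lra.
Qed.

Definition shift {d : nat} (y : pt d) (st : 'I_d * bool) : pt d :=
  fun j => (y j + step_vec st j)%R.
Definition sq2 {d : nat} (y c : pt d) : R := \sum_j ((y j - c j)%:~R)^+2.
Definition psi {d : nat} (L : R) (c y : pt d) : R :=
  Num.sqrt L / q4 (10000 * L^+2 + sq2 y c).
Definition Pop {d : nat} (G : pt d -> R) (y : pt d) : R :=
  (\sum_(st : 'I_d * bool) G (shift y st)) / (2 * d)%:R.

Lemma sq2_shift d (y c : pt d) j b :
  sq2 (shift y (j, b)) c = sq2 y c +
     (1 + 2 * (if b then ((y j - c j)%:~R : R) else - ((y j - c j)%:~R : R))).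
Proof.
 rewrite /sq2 (bigD1 j) //= [in RHS](bigD1 j) //=.
 rewrite (eq_bigr (fun k => ((y k - c k)%:~R : R) ^+ 2)); last first.
   by move=> k hk; rewrite /shift /step_vec /= (negbTE hk) addr0.
 rewrite /shift /step_vec /= eqxx.
 set S := \sum_(i < d | i != j) _.
 have -> : y j + (if b then 1 else -1) - c j = (y j - c j) + (if b then 1 else -1) by ring.
 rewrite intrD; case: b => /=; rewrite ?rmorphN /=; ring.
Qed.

Lemma Pop_psi d (L : R) (c y : pt d) : Pop (psi L c) y =
  Num.sqrt L * (\sum_(j < d) ((q4 (10000 * L^+2 + sq2 y c + (1 + 2 * ((y j - c j)%:~R))))^-1
     + (q4 (10000 * L^+2 + sq2 y c + (1 - 2 * ((y j - c j)%:~R))))^-1)) / (2 * d)%:R.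
Proof.
 rewrite /Pop (eq_bigr (fun p => psi L c (shift y (p.1, p.2)))); last by case.
 rewrite -(pair_bigA _ (fun j b => psi L c (shift y (j, b)))) /=.
 congr (_ / _). rewrite mulr_sumr; apply: eq_bigr => j _.
 rewrite big_bool /= /psi !sq2_shift !addrA mulrDr mulrN. done.
Qed.

Lemma Pop_psi_le d (L : R) (c y : pt d) : (3 <= d)%N -> 1 <= L ->
  Pop (psi L c) y <= psi L c y - Num.sqrt L * (q4 (10000 * L^+2 + sq2 y c))^-1 ^+ 5 / 32.
Proof.
 move=> hd hL.
 have hA : 10000 <= 10000 * L^+2 by rewrite expr2; nra.
 have := nbsum d (fun j => (y j - c j)%:~R) (10000 * L^+2) hd hA.
 rewrite -/(sq2 y c) => hs.
 rewrite Pop_psi.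
 have hd0 : (0 < (2 * d)%:R :> R) by rewrite ltr0n muln_gt0 /=; apply: leq_trans hd.
 rewrite ler_pdivrMr //.
 set S := \sum_(j < d) _ in hs *.
 set iv := (q4 _)^-1 in hs *.
 have -> : (psi L c y - Num.sqrt L * iv ^+ 5 / 32) * (2 * d)%:R
    = Num.sqrt L * (d%:R * 2 * (iv - iv ^+ 5 / 32)) by rewrite /psi -/iv natrM; ring.
 by rewrite ler_wpM2l ?sqrtr_ge0.
Qed.

Lemma psi_ge0 d (L : R) (c y : pt d) : 0 <= psi L c y.
Proof. by rewrite /psi divr_ge0 ?sqrtr_ge0 ?q4_ge0. Qed.

Lemma sq2_ge0 d (y c : pt d) : 0 <= sq2 y c.
Proof. by rewrite /sq2 sumr_ge0 // => k _; exact: sqr_ge0. Qed.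

Lemma Pop_psi_super d (L : R) (c y : pt d) : (3 <= d)%N -> 1 <= L ->
  Pop (psi L c) y <= psi L c y.
Proof.
 move=> hd hL; apply: le_trans (Pop_psi_le d L c y hd hL) _.
 rewrite lerBlDr lerDl; apply: mulr_ge0; [apply: mulr_ge0; [exact: sqrtr_ge0| by rewrite exprn_ge0 // invr_ge0 q4_ge0] | lra].
Qed.

Lemma dist_tri d (a b c : pt d) : (dist a c <= dist a b + dist b c)%N.
Proof.
 rewrite /dist; apply/bigmax_leqP => j _.
 apply: leq_trans (leqD_dist (a j) (b j) (c j)) _.
 by apply: leq_add; apply: (leq_bigmax j).
Qed.

Lemma dist_sym d (a b : pt d) : dist a b = dist b a.
Proof. by rewrite /dist; apply: eq_bigr => j _; rewrite distnC. Qed.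

Lemma dist_coord d (a b : pt d) j : (absz (a j - b j) <= dist a b)%N.
Proof. exact: (leq_bigmax j). Qed.

Lemma max_sq (I : Type) (r : seq I) (F : I -> nat) :
  ((\max_(j <- r) F j) ^ 2 <= \sum_(j <- r) F j ^ 2)%N.
Proof.
 elim: r => [|x r IH]; first by rewrite !big_nil.
 rewrite !big_cons. move: (\max_(j <- r) F j) IH => M IH.
 case: (leqP (F x) M) => h.
 - apply: leq_trans IH _. exact: leq_addl.
 - exact: leq_addr.
Qed.

Lemma sqr_absz (m : int) : ((absz m)%:R : R) ^+ 2 = (m%:~R) ^+ 2.
Proof. by rewrite natr_absz intr_norm -normrX ger0_norm ?sqr_ge0. Qed.

Lemma sq2_ge_dist d (y c : pt d) : ((dist y c)%:R : R) ^+ 2 <= sq2 y c.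
Proof.
 rewrite /sq2 -natrX.
 apply: le_trans (_ : ((\sum_(j < d) (absz (y j - c j)) ^ 2)%N%:R : R) <= _).
   by rewrite ler_nat; exact: max_sq.
 by rewrite natr_sum; apply: ler_sum => j _; rewrite natrX sqr_absz.
Qed.

Lemma sq2_le_dist d (y c : pt d) (L : R) : ((dist y c)%:R : R) <= L ->
  sq2 y c <= d%:R * L ^+ 2.
Proof.
 move=> hD. rewrite /sq2.
 apply: le_trans (_ : \sum_(j < d) L ^+ 2 <= _); last by rewrite sumr_const card_ord mulr_natl.
 have hL0 : 0 <= L by apply: le_trans hD; rewrite ler0n.
 apply: ler_sum => j _. rewrite -sqr_absz.
 rewrite lerXn2r ?nnegrE ?ler0n //.
 by apply: le_trans hD; rewrite ler_nat dist_coord.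
Qed.

Lemma q4_10000 : q4 10000 = 10.
Proof.
 rewrite /q4 (_ : 10000 = 100 ^+ 2); last by rewrite expr2; lra.
 rewrite sqrtr_sqr ger0_norm; last lra.
 rewrite (_ : 100 = 10 ^+ 2); last by rewrite expr2; lra.
 by rewrite sqrtr_sqr ger0_norm //; lra.
Qed.

Lemma psi_le_tenth d (L : R) (c y : pt d) : 0 < L -> psi L c y <= 1/10.
Proof.
 move=> hL.
 have hq : 10 * Num.sqrt L <= q4 (10000 * L^+2 + sq2 y c).
 { rewrite -q4_10000 -(q4_sqr L (ltW hL)) -q4M; last lra.
   apply: q4_le; last by rewrite lerDl sq2_ge0.
   apply: addr_ge0; last exact: sq2_ge0. rewrite mulr_ge0 ?sqr_ge0 //; lra. }
 have hs : 0 < Num.sqrt L by rewrite sqrtr_gt0.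
 rewrite /psi ler_pdivrMr; last lra. lra.
Qed.

Lemma psi_le_far d (L : R) (c y : pt d) : 0 < L -> 0 < ((dist y c)%:R : R) ->
  psi L c y <= Num.sqrt L / Num.sqrt ((dist y c)%:R : R).
Proof.
 move=> hL hD.
 have hq : Num.sqrt ((dist y c)%:R : R) <= q4 (10000 * L^+2 + sq2 y c).
 { rewrite -(q4_sqr _ (ltW hD)). apply: q4_le.
   - apply: addr_ge0; last exact: sq2_ge0. rewrite mulr_ge0 ?sqr_ge0 //; lra.
   - apply: le_trans (sq2_ge_dist d y c) _. rewrite lerDr mulr_ge0 ?sqr_ge0 //; lra. }
 have hs : 0 < Num.sqrt ((dist y c)%:R : R) by rewrite sqrtr_gt0.
 rewrite /psi ler_wpM2l ?sqrtr_ge0 // lef_pV2 // posrE //. apply: lt_le_trans hs hq.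
Qed.

Definition kap (d : nat) : R := (q4 (10000 + d%:R) ^+ 5)^-1 / 32.

Lemma psi_strict d (L : R) (c y : pt d) : (3 <= d)%N -> 1 <= L -> ((dist y c)%:R : R) <= L ->
  kap d / L ^+ 2 <= psi L c y - Pop (psi L c) y.
Proof.
 move=> hd hL hD.
 have := Pop_psi_le d L c y hd hL.
 set v := q4 _ => hP.
 have hL0 : 0 < L by lra.
 set s := Num.sqrt L.
 have hs : 0 < s by rewrite sqrtr_gt0.
 have hs2 : s ^+ 2 = L by rewrite sqr_sqrtr // ltW.
 set Q := q4 (10000 + d%:R).
 have hQ : 0 < Q by apply: q4_gt0; rewrite ltr_wpDr ?ler0n //; lra.
 have hv : v <= Q * s.
 { rewrite /Q /s -(q4_sqr _ (ltW hL0)) -q4M; last by rewrite addr_ge0 ?ler0n //; lra.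
   apply: q4_le. rewrite mulr_ge0 ?sqr_ge0 // addr_ge0 ?ler0n //; lra.
   have := sq2_le_dist d y c L hD; lra. }
 have hv0 : 0 < v by apply: q4_gt0; rewrite ltr_wpDr ?sq2_ge0 // mulr_gt0 ?exprn_gt0 //; lra.
 have hiv : (Q * s)^-1 <= v^-1 by rewrite lef_pV2 // posrE // mulr_gt0.
 have hiv5 : ((Q * s)^-1) ^+ 5 <= v^-1 ^+ 5.
   by rewrite lerXn2r // nnegrE invr_ge0; apply: ltW => //; rewrite mulr_gt0.
 apply: le_trans (_ : s * ((Q * s)^-1) ^+ 5 / 32 <= _).
 { rewrite /kap -hs2 -/Q. rewrite le_eqVlt; apply/orP; left; apply/eqP.
   have sne : s != 0 by rewrite gt_eqF. have Qne : Q != 0 by rewrite gt_eqF.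
   field. by rewrite sne Qne. }
 rewrite -/s in hP. move: hP; set P := Pop _ y => hP.
 have : s * ((Q * s)^-1) ^+ 5 <= s * v^-1 ^+ 5 by rewrite ler_wpM2l // ltW.
 lra.
Qed.

Fixpoint leaves (k : nat) : seq (seq bool) :=
  if k is k'.+1 then [seq false :: r | r <- leaves k'] ++ [seq true :: r | r <- leaves k']
  else [:: [::]].

Definition Tsum {d : nat} (L : R) (M : seq bool -> pt d) (m : seq bool) (k : nat) (y : pt d) : R :=
  \sum_(r <- leaves k) psi L (M (m ++ r)) y.

Lemma Tsum0 d L (M : seq bool -> pt d) m y : Tsum L M m 0 y = psi L (M m) y.
Proof. by rewrite /Tsum /= big_seq1 cats0. Qed.

Lemma TsumS d L (M : seq bool -> pt d) m k y :
  Tsum L M m k.+1 y = Tsum L M (rcons m false) k y + Tsum L M (rcons m true) k y.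
Proof. by rewrite /Tsum /= big_cat !big_map /=; congr (_ + _); apply: eq_bigr => r _; rewrite cat_rcons. Qed.

Lemma mem_leaves (r : seq bool) : r \in leaves (size r).
Proof.
 elim: r => [|b r IH] //=. rewrite mem_cat; apply/orP; case: b; [right|left]; apply/mapP; by exists r.
Qed.

Definition emb_ok {d : nat} (L0 n : nat) (M : seq bool -> pt d) : Prop :=
  forall m : seq bool, (size m < n)%N ->
      dist (M (rcons m false)) (M m) = Lk L0 (n - size m) /\
      dist (M (rcons m true)) (M m) = 2 * Lk L0 (n - size m).

Definition Lr (L0 j : nat) : R := (Lk L0 j)%:R.

Lemma LkS L0 j : Lk L0 j.+1 = 6 * Lk L0 j.
Proof. by rewrite /Lk expnS mulnCA. Qed.

Lemma Lr_ge0 L0 j : 0 <= Lr L0 j.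
Proof. by rewrite /Lr ler0n. Qed.

Lemma Lr_ge1 L0 j : (0 < L0)%N -> 1 <= Lr L0 j.
Proof. by move=> h; rewrite /Lr (ler_nat R 1) /Lk muln_gt0 h expn_gt0. Qed.

Definition gam : R := 2 / Num.sqrt 6.

Lemma sqrt6_gt2 : 2 < Num.sqrt (6 : R).
Proof.
 have -> : (2 : R) = Num.sqrt 4.
   by rewrite (_ : (4 : R) = 2 ^+ 2) ?sqrtr_sqr ?ger0_norm //; rewrite expr2; lra.
 rewrite ltr_sqrt; lra.
Qed.

Lemma gam_gt0 : 0 < gam.
Proof. have := sqrt6_gt2 => h. rewrite /gam divr_gt0 //; lra. Qed.

Lemma gam_lt1 : gam < 1.
Proof. have := sqrt6_gt2 => h. rewrite /gam ltr_pdivrMr; lra. Qed.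

Lemma frac_le (a b c e : R) : 0 < b -> 0 < e -> a * e <= c * b -> a / b <= c / e.
Proof. by move=> hb he h; rewrite ler_pdivrMr // mulrAC ler_pdivlMr. Qed.

Lemma sqrt_div_le (a b c : R) : 0 <= a -> 0 < b -> 0 <= c -> a / b <= c ->
  Num.sqrt a / Num.sqrt b <= Num.sqrt c.
Proof.
 move=> ha hb hc h. rewrite -sqrtrV ?(ltW hb) // -sqrtrM // ler_sqrt //.
Qed.

Lemma Tsum_far d L0 n (M : seq bool -> pt d) (L : R) k : (0 < L0)%N ->
  emb_ok L0 n M -> forall m y, (size m + k <= n)%N -> L = 6 * Lr L0 (n - size m - k) ->
  12 * Lr L0 (n - size m) < 5 * (dist y (M m))%:R ->
  Tsum L M m k y <= gam ^+ k *
     Num.sqrt (30 * Lr L0 (n - size m) / (5 * (dist y (M m))%:R - 12 * Lr L0 (n - size m))).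
Proof.
 move=> hL0 hM. elim: k => [|k IH] m y hs hL hD.
 - rewrite Tsum0 expr0 mul1r. rewrite subn0 in hL.
   have hLj := Lr_ge1 L0 (n - size m) hL0.
   move: hL hD hLj. set Lj := Lr L0 (n - size m). set D := ((dist y (M m))%:R : R).
   move=> hL hD hLj.
   have hD0 : 0 < D by lra.
   have hLp : 0 < L by lra.
   apply: le_trans (psi_le_far d L (M m) y hLp hD0) _.
   rewrite -/D. apply: sqrt_div_le; [lra|lra| |].
   + rewrite divr_ge0 //; lra.
   + rewrite hL; apply: frac_le; [lra|lra|].
     have : 0 <= Lj * Lj by rewrite mulr_ge0 //; lra. lra.
 - have hsm : (size m < n)%N by lia.
   have [e0 e1] := hM m hsm.
   have hLj1 := Lr_ge1 L0 (n - size m - 1) hL0.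
   have hLj : Lr L0 (n - size m) = 6 * Lr L0 (n - size m - 1).
     by rewrite /Lr {1}(_ : (n - size m = (n - size m - 1).+1)%N); [rewrite LkS natrM | lia].
   rewrite TsumS.
   have child : forall b, Tsum L M (rcons m b) k y <=
       gam ^+ k * (Num.sqrt (30 * Lr L0 (n - size m) /
          (5 * (dist y (M m))%:R - 12 * Lr L0 (n - size m))) / Num.sqrt 6).
   { move=> b.
     have hdb : (dist (M (rcons m b)) (M m) <= 2 * Lk L0 (n - size m))%N.
       by case: b; rewrite ?e0 ?e1; lia.
     have tri := dist_tri d y (M (rcons m b)) (M m).
     have hDb : ((dist y (M m))%:R : R) <= (dist y (M (rcons m b)))%:R + 2 * Lr L0 (n - size m).
     { have : (dist y (M m) <= dist y (M (rcons m b)) + 2 * Lk L0 (n - size m))%N by lia.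
       by rewrite -(ler_nat R) natrD natrM. }
     have IHb := IH (rcons m b) y.
     rewrite size_rcons in IHb.
     have e2 : (n - (size m).+1 = n - size m - 1)%N by lia.
     have e3 : (n - (size m).+1 - k = n - size m - k.+1)%N by lia.
     rewrite e3 e2 in IHb.
     move: IHb hDb hD hLj hLj1. rewrite -/(Lr L0 (n - size m)).
     set Lj := Lr L0 (n - size m). set Lj' := Lr L0 (n - size m - 1).
     set D := ((dist y (M m))%:R : R). set Db := ((dist y (M (rcons m b)))%:R : R).
     move=> IHb hDb hD hLj hLj1.
     have {}IHb := IHb ltac:(lia) hL ltac:(lra).
     apply: le_trans IHb _.
     apply: ler_wpM2l; first by rewrite exprn_ge0 // ltW // gam_gt0.
     have h6 : 0 < Num.sqrt (6 : R) by rewrite sqrtr_gt0; lra.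
     rewrite ler_pdivlMr // -sqrtrM; last by rewrite divr_ge0 //; lra.
     rewrite ler_sqrt; last by rewrite divr_ge0 //; lra.
     rewrite mulrAC. apply: frac_le; [lra|lra|].
     rewrite hLj in hDb *.
     have : 0 <= Lj' * (Db - D + 12 * Lj') by rewrite mulr_ge0 //; lra.
     lra. }
   apply: le_trans (lerD (child false) (child true)) _.
   rewrite exprS /gam. set X := Num.sqrt _. lra.
Qed.

Lemma Tsum_unif d L0 n (M : seq bool -> pt d) (L : R) k : (0 < L0)%N ->
  emb_ok L0 n M -> forall m y, (size m + k <= n)%N -> L = 6 * Lr L0 (n - size m - k) ->
  Tsum L M m k y <= 1 + Num.sqrt 10 * (1 - gam ^+ k) / (1 - gam).
Proof.
 move=> hL0 hM. elim: k => [|k IH] m y hs hL.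
 - rewrite Tsum0 expr0 subrr mulr0 mul0r addr0.
   have := Lr_ge1 L0 (n - size m - 0) hL0 => h1.
   have hLp : 0 < L by lra.
   apply: le_trans (psi_le_tenth d L (M m) y hLp) _. lra.
 - have hsm : (size m < n)%N by lia.
   have [e0 e1] := hM m hsm.
   have hLj1 := Lr_ge1 L0 (n - size m - 1) hL0.
   have hLj : Lr L0 (n - size m) = 6 * Lr L0 (n - size m - 1).
     by rewrite /Lr {1}(_ : (n - size m = (n - size m - 1).+1)%N); [rewrite LkS natrM | lia].
   have e2 : (n - (size m).+1 = n - size m - 1)%N by lia.
   have e3 : (n - (size m).+1 - k = n - size m - k.+1)%N by lia.
   rewrite TsumS.
   have sib : (Lk L0 (n - size m) <= dist y (M (rcons m false)) + dist y (M (rcons m true)))%N.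
   { have t1 := dist_tri d (M (rcons m true)) (M (rcons m false)) (M m).
     have t2 := dist_tri d (M (rcons m true)) y (M (rcons m false)).
     rewrite (dist_sym d (M (rcons m true)) y) in t2. lia. }
   have farb : forall b, (Lk L0 (n - size m) <= 2 * dist y (M (rcons m b)))%N ->
       Tsum L M (rcons m b) k y <= gam ^+ k * Num.sqrt 10.
   { move=> b hb.
     have hF := Tsum_far d L0 n M L k hL0 hM (rcons m b) y.
     rewrite size_rcons e3 e2 in hF.
     have hb' : Lr L0 (n - size m) <= 2 * (dist y (M (rcons m b)))%:R.
       by rewrite /Lr -(ler_nat R) natrM in hb.
     move: hF hb' hLj hLj1.
     set Lj := Lr L0 (n - size m). set Lj' := Lr L0 (n - size m - 1).
     set Db := ((dist y (M (rcons m b)))%:R : R).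
     move=> hF hb' hLj hLj1.
     have {}hF := hF ltac:(lia) hL ltac:(lra).
     apply: le_trans hF _.
     apply: ler_wpM2l; first by rewrite exprn_ge0 // ltW // gam_gt0.
     rewrite ler_sqrt; last lra.
     rewrite ler_pdivrMr; lra. }
   have IHb : forall b, Tsum L M (rcons m b) k y <= 1 + Num.sqrt 10 * (1 - gam ^+ k) / (1 - gam).
   { move=> b. apply: IH; rewrite size_rcons ?e3 //; lia. }
   have hg := gam_lt1.
   have hgk : 0 <= gam ^+ k by rewrite exprn_ge0 // ltW // gam_gt0.
   have E : Num.sqrt 10 * (1 - gam ^+ k) / (1 - gam) + gam ^+ k * Num.sqrt 10
          = Num.sqrt 10 * (1 - gam ^+ k.+1) / (1 - gam).
   { have gne : 1 - gam != 0 by rewrite subr_eq0 eq_sym lt_eqF.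
     rewrite exprS. field. by rewrite gne. }
   have [h0|h1] : (Lk L0 (n - size m) <= 2 * dist y (M (rcons m false)))%N \/
                  (Lk L0 (n - size m) <= 2 * dist y (M (rcons m true)))%N by lia.
   + have := farb false h0. have := IHb true. lra.
   + have := farb true h1. have := IHb false. lra.
Qed.

Definition Kb : R := 1 + Num.sqrt 10 / (1 - gam).

Lemma unif_le_Kb k : 1 + Num.sqrt 10 * (1 - gam ^+ k) / (1 - gam) <= Kb.
Proof.
 have hg := gam_lt1. have hgk : 0 <= gam ^+ k by rewrite exprn_ge0 // ltW // gam_gt0.
 rewrite /Kb lerD2l. apply: ler_wpM2r; first by rewrite invr_ge0; lra.
 have := mulr_ge0 (sqrtr_ge0 (10 : R)) hgk. lra.
Qed.

Lemma Kb_ge1 : 1 <= Kb.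
Proof.
 have hg := gam_lt1. rewrite /Kb lerDl divr_ge0 ?sqrtr_ge0 //; lra.
Qed.

Lemma Pop_ext d (F F' : pt d -> R) y : (forall w, F w = F' w) -> Pop F y = Pop F' y.
Proof. by move=> h; rewrite /Pop; congr (_ / _); apply: eq_bigr => st _; rewrite h. Qed.

Lemma Pop_sum d (A : Type) (r : seq A) (F : A -> pt d -> R) y :
  Pop (fun w => \sum_(a <- r) F a w) y = \sum_(a <- r) Pop (F a) y.
Proof. by rewrite /Pop exchange_big /= mulr_suml. Qed.

Lemma Pop_lin d (I : nat) (c : nat -> R) (F : nat -> pt d -> R) y :
  Pop (fun w => \sum_(i < I) c i * F i w) y = \sum_(i < I) c i * Pop (F i) y.
Proof.
 rewrite /Pop exchange_big /= mulr_suml; apply: eq_bigr => i _.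
 by rewrite -mulr_sumr mulrA.
Qed.

Lemma Pop_affine d (a b : R) (F : pt d -> R) y : (0 < d)%N ->
  Pop (fun w => a + b * F w) y = a + b * Pop F y.
Proof.
 move=> hd. rewrite /Pop big_split /= sumr_const -mulr_sumr card_prod card_ord card_bool.
 have hne : ((2 * d)%:R : R) != 0 by rewrite pnatr_eq0 muln_eq0 negb_or /= -lt0n hd.
 rewrite -[a *+ _]mulr_natr mulnC. field. by rewrite pnatr_eq0 -lt0n.
Qed.

Definition Gf {d : nat} (L0 n : nat) (x : pt d) (M : seq bool -> pt d) (i : nat) (y : pt d) : R :=
  if (i <= n)%N then Tsum (Lr L0 i.+1) M [::] (n - i) y else psi (Lr L0 i.+1) x y.

Lemma LrS L0 i : Lr L0 i.+1 = 6 * Lr L0 i.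
Proof. by rewrite /Lr LkS natrM. Qed.

Lemma Gf_ge0 d L0 n x (M : seq bool -> pt d) i y : 0 <= Gf L0 n x M i y.
Proof.
 rewrite /Gf; case: ifP => _; last exact: psi_ge0.
 by rewrite /Tsum sumr_ge0 // => r _; exact: psi_ge0.
Qed.

Lemma Gf_le d L0 n x (M : seq bool -> pt d) i y : (0 < L0)%N -> emb_ok L0 n M ->
  Gf L0 n x M i y <= Kb.
Proof.
 move=> hL0 hM. rewrite /Gf; case: ifP => hi.
 - apply: le_trans (unif_le_Kb (n - i)).
   have e : (n - size (@nil bool) - (n - i) = i)%N by rewrite /= subn0; lia.
   apply: (Tsum_unif d L0 n M (Lr L0 i.+1) (n - i) hL0 hM [::] y).
   + by rewrite /= add0n leq_subr.
   + by rewrite e LrS.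
 - have h1 := Lr_ge1 L0 i.+1 hL0.
   have hp : 0 < Lr L0 i.+1 by lra.
   apply: le_trans (psi_le_tenth d (Lr L0 i.+1) x y hp) _. have := Kb_ge1. lra.
Qed.

Lemma Gf_super d L0 n x (M : seq bool -> pt d) i y : (3 <= d)%N -> (0 < L0)%N ->
  Pop (Gf L0 n x M i) y <= Gf L0 n x M i y.
Proof.
 move=> hd hL0. have h1 := Lr_ge1 L0 i.+1 hL0.
 rewrite /Gf; case: ifP => hi.
 - rewrite (Pop_ext _ _ (fun w => \sum_(r <- leaves (n - i)) psi (Lr L0 i.+1) (M ([::] ++ r)) w)); last by move=> w; rewrite /Gf ?hi ?/Tsum.
   rewrite Pop_sum /Tsum. apply: ler_sum => r _. exact: Pop_psi_super.
 - rewrite (Pop_ext _ _ (psi (Lr L0 i.+1) x)); last by move=> w; rewrite /Gf ?hi ?/Tsum.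
   exact: Pop_psi_super.
Qed.

Lemma Gf_strict d L0 n x (M : seq bool -> pt d) i y : (3 <= d)%N -> (0 < L0)%N ->
  in_U L0 n x M i y -> kap d / Lr L0 i.+1 ^+ 2 <= Gf L0 n x M i y - Pop (Gf L0 n x M i) y.
Proof.
 move=> hd hL0. have h1 := Lr_ge1 L0 i.+1 hL0.
 rewrite /in_U /Gf; case: ifP => hi.
 - case/existsP => t ht.
   rewrite (Pop_ext _ _ (fun w => \sum_(r <- leaves (n - i)) psi (Lr L0 i.+1) (M ([::] ++ r)) w)); last by move=> w; rewrite /Gf ?hi ?/Tsum.
   rewrite Pop_sum /Tsum -sumrB.
   have tin : tval t \in leaves (n - i) by rewrite -{2}(size_tuple t) mem_leaves.
   rewrite (big_rem _ tin) /=.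
   apply: le_trans (_ : psi (Lr L0 i.+1) (M t) y - Pop (psi (Lr L0 i.+1) (M t)) y <= _).
   + apply: psi_strict => //. by rewrite /Lr ler_nat.
   + rewrite lerDl sumr_ge0 // => r _. rewrite subr_ge0. exact: Pop_psi_super.
 - rewrite (Pop_ext _ _ (psi (Lr L0 i.+1) x)); last by move=> w; rewrite /Gf ?hi ?/Tsum.
   move=> h. apply: psi_strict => //. by rewrite /Lr ler_nat.
Qed.

Lemma shell_U d L0 n x (M : seq bool -> pt d) i y : in_shell L0 n x M i y -> in_U L0 n x M i y.
Proof. by case: i => [|i] //= /andP []. Qed.

Lemma geo_eq I : \sum_(i < I) (3^-1 : R) ^+ i = 3/2 * (1 - (3^-1) ^+ I).
Proof.
 elim: I => [|I IH]; first by rewrite big_ord0 expr0 subrr mulr0.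
 rewrite big_ord_recr /= IH exprS. by field.
Qed.

Lemma geo_le I : \sum_(i < I) (3^-1 : R) ^+ i <= 3/2.
Proof.
 rewrite geo_eq. have : 0 <= (3^-1 : R) ^+ I by rewrite exprn_ge0 // invr_ge0; lra.
 lra.
Qed.

Lemma exp_le (x : R) : 0 <= x -> x <= 1/2 -> exp x <= 1 + 2 * x.
Proof.
 move=> h0 h1.
 have h := exp_ineq1_le (- x). move/RleP: h. rewrite exp_Ropp RinvE => h.
 have he : 0 < exp x by apply/RltP; exact: exp_pos.
 have : (1 - x) * exp x <= 1.
 { have := ler_wpM2r (ltW he) h. rewrite mulVf ?gt_eqF //. }
 move=> h2.
 have h3 : 0 <= x * (1 - 2 * x) by rewrite mulr_ge0 //; lra.
 have h4 : (1 - x) * (exp x - (1 + 2 * x)) <= 0 by lra.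
 rewrite pmulr_rle0 in h4; last lra. lra.
Qed.

Lemma tuple_cons_sum (T : finType) N (F : seq T -> R) :
  \sum_(s : N.+1.-tuple T) F s = \sum_(a : T) \sum_(s : N.-tuple T) F (a :: s).
Proof.
 rewrite pair_bigA /=.
 rewrite (reindex (fun p : T * N.-tuple T => [tuple of p.1 :: p.2])) /=; first by [].
 exists (fun s : N.+1.-tuple T => (thead s, [tuple of behead s])).
 - by move=> [a s] _ /=; congr (_, _); apply: val_inj.
 - by move=> s _; rewrite [in RHS](tuple_eta s).
Qed.

Lemma pos0 d (z : pt d) (s : seq ('I_d * bool)) : pos z s 0 = z.
Proof. by apply: functional_extensionality => j; rewrite /pos take0 big_nil addr0. Qed.

Lemma posS d (z : pt d) a (s : seq ('I_d * bool)) k : pos z (a :: s) k.+1 = pos (shift z a) s k.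
Proof. by apply: functional_extensionality => j; rewrite /pos /shift /= big_cons addrA. Qed.

Lemma lyap d (W g : pt d -> R) : (0 < d)%N -> (forall y, 0 <= g y) ->
  (forall y, exp (W y) * Pop g y <= g y) ->
  forall N z, \sum_(s : N.-tuple ('I_d * bool))
     exp (\sum_(k < N) W (pos z s k)) * g (pos z s N) / ((2 * d) ^ N)%:R <= g z.
Proof.
 move=> hd hg hW. elim => [|N IH] z.
 - rewrite (eq_bigr (fun _ => g z)); last first.
     by move=> s _; rewrite big_ord0 pos0 expn0 expR0 mul1r divr1.
   by rewrite sumr_const card_tuple expn0.
 - rewrite (tuple_cons_sum _ N (fun s => exp (\sum_(k < N.+1) W (pos z s k)) * g (pos z s N.+1)
        / ((2 * d) ^ N.+1)%:R)).
   have h2d : (0 < ((2 * d)%:R : R)) by rewrite ltr0n muln_gt0.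
   rewrite (eq_bigr (fun a => exp (W z) / (2 * d)%:R *
       \sum_(s : N.-tuple ('I_d * bool)) exp (\sum_(k < N) W (pos (shift z a) s k))
           * g (pos (shift z a) s N) / ((2 * d) ^ N)%:R)); last first.
   { move=> a _. rewrite mulr_sumr; apply: eq_bigr => s _.
     rewrite big_ord_recl /= pos0 posS.
     rewrite (eq_bigr (fun k : 'I_N => W (pos (shift z a) s k))); last first.
       by move=> k _; rewrite /bump /= posS.
     rewrite -expRD expnS natrM.
     have hne : ((2 * d)%:R : R) != 0 by rewrite gt_eqF.
     have hne2 : (((2 * d) ^ N)%:R : R) != 0 by rewrite pnatr_eq0 expn_eq0 negb_and muln_eq0 /= -lt0n hd.
     field. by rewrite hne2 pnatr_eq0 -lt0n hd. }
   rewrite -mulr_sumr.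
   apply: le_trans (hW z). rewrite /Pop mulrAC -mulrA.
   apply: ler_wpM2l; first by apply: ltW; apply/RltP; exact: exp_pos.
   apply: ler_wpM2r; first by rewrite invr_ge0 ltW.
   by apply: ler_sum => a _; exact: IH.
Qed.

Lemma kap_gt0 d : 0 < kap d.
Proof.
 have hq : 0 < q4 (10000 + d%:R).
 { apply: q4_gt0. have := ler0n R d. lra. }
 rewrite /kap; apply: divr_gt0; [by rewrite invr_gt0 exprn_gt0 | lra].
Qed.

Lemma q4_1 : q4 1 = 1.
Proof. by rewrite /q4 !sqrtr1. Qed.

Lemma kap_le d : kap d <= 1/32.
Proof.
 have hq : 1 <= q4 (10000 + d%:R).
 { rewrite -{1}q4_1. have := ler0n R d. move=> h. apply: q4_le; lra. }
 have h5 : 1 <= q4 (10000 + d%:R) ^+ 5 by rewrite exprn_ege1.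
 rewrite /kap. apply: ler_wpM2r; first lra. rewrite invf_le1; lra.
Qed.

Lemma count_R (P : pred nat) N : ((count P (iota 0 N))%:R : R) = \sum_(k < N) ((P k : nat)%:R).
Proof.
 rewrite -sum1_count big_mkcond /= natr_sum -{1}(subn0 N) -/(index_iota 0 N) big_mkord.
 by apply: eq_bigr => k _; case: (P k).
Qed.

Lemma Pop_ge0 d (F : pt d -> R) y : (forall w, 0 <= F w) -> 0 <= Pop F y.
Proof. by move=> h; rewrite /Pop divr_ge0 ?ler0n // sumr_ge0. Qed.

Lemma main_aux (d : nat) (hd : (3 <= d)%N) :
  exists eps : R, (0 < eps)%R /\
    forall (L0 n : nat) (x : pt d) (M : seq bool -> pt d),
      (0 < L0)%N -> (0 < n)%N -> in_lat L0 n x -> in_F x -> in_LambdaF L0 n x M ->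
      exists C : R, forall (z : pt d) (N I : nat),
        (srw_E N (trunc_functional L0 n x M eps z N I) <= C)%R.
Proof.
 have hk := kap_gt0 d. have hkle := kap_le d. have hKb := Kb_ge1.
 have hd0 : (0 < d)%N by apply: leq_trans hd.
 set eps : R := kap d / (216 * Kb).
 have heps : 0 < eps by rewrite /eps divr_gt0 //; lra.
 exists eps; split => //.
 move=> L0 n x M hL0 hn _ _ [[hMx [_ hemb]] _].
 have hM : emb_ok L0 n M := hemb.
 exists 2 => z N I.
 set B : R := 54 * Kb / kap d.
 have hepsB : 4 * eps * B = 1.
 { rewrite /eps /B. have kne : kap d != 0 by rewrite gt_eqF. have Kne : Kb != 0 by rewrite gt_eqF //; lra.
   field. by rewrite kne Kne. }
 have hB1 : 1 <= B.
 { rewrite /B ler_pdivlMr //. lra. }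
 pose V (y : pt d) : R := \sum_(i < I) ((in_shell L0 n x M i y : nat)%:R) / ((Lk L0 i ^ 2 * 3 ^ i)%:R).
 pose cf (i : nat) : R := 36 / (kap d * 3 ^+ i).
 pose f (y : pt d) : R := \sum_(i < I) cf i * Gf L0 n x M i y.
 pose g (y : pt d) : R := 1 + 4 * eps * f y.
 have hcf : forall i, 0 <= cf i.
 { move=> i. rewrite /cf; apply: divr_ge0; [lra | apply: mulr_ge0; [lra | apply: exprn_ge0; lra]]. }
 have hf0 : forall y, 0 <= f y.
 { move=> y. rewrite /f sumr_ge0 // => i _. by rewrite mulr_ge0 ?Gf_ge0. }
 have hfB : forall y, f y <= B.
 { move=> y. apply: le_trans (_ : \sum_(i < I) (36 * Kb / kap d) * (3^-1) ^+ i <= _).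
   - apply: ler_sum => i _.
     have -> : 36 * Kb / kap d * 3^-1 ^+ i = cf i * Kb.
     { rewrite /cf exprVn. have kne : kap d != 0 by rewrite gt_eqF.
       have tne : (3 : R) ^+ i != 0 by rewrite expf_neq0 //; lra.
       field. by rewrite kne tne. }
     by rewrite ler_wpM2l ?Gf_le.
   - rewrite -mulr_sumr /B. have := geo_le I.
     have : 0 <= 36 * Kb / kap d by rewrite divr_ge0 //; lra.
     move=> h0 hg. have := ler_wpM2l h0 hg.
     have kne : kap d != 0 by rewrite gt_eqF.
     have -> : 54 * Kb / kap d = 36 * Kb / kap d * (3/2) by field; rewrite kne.
     done. }
 have hden : forall (i : nat), ((Lk L0 i ^ 2 * 3 ^ i)%:R : R) = Lr L0 i ^+ 2 * 3 ^+ i.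
 { move=> i. by rewrite natrM !natrX. }
 have hV0 : forall y, 0 <= V y.
 { move=> y. rewrite /V sumr_ge0 // => i _. by rewrite divr_ge0 ?ler0n. }
 have hV : forall y, V y <= 3/2.
 { move=> y. apply: le_trans (geo_le I). apply: ler_sum => i _.
   rewrite hden exprVn -(div1r (3 ^+ i)).
   have h1 := Lr_ge1 L0 i hL0.
   have h3 : 0 < (3 : R) ^+ i by rewrite exprn_gt0 //; lra.
   have hL2 : 1 <= Lr L0 i ^+ 2 by rewrite expr_ge1 //.
   apply: frac_le; [by rewrite mulr_gt0 //; lra | done |].
   have hb : ((in_shell L0 n x M i y : nat)%:R : R) <= 1 by case: (in_shell _ _ _ _ _ _).
   have hb0 : 0 <= ((in_shell L0 n x M i y : nat)%:R : R) by rewrite ler0n.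
   apply: le_trans (_ : 1 * 3 ^+ i <= _).
   - by rewrite ler_wpM2r // ltW.
   - rewrite !mul1r -{1}(mul1r (3 ^+ i)) ler_wpM2r // ltW //. }
 have hfV : forall y, V y <= f y - Pop f y.
 { move=> y. rewrite /f (Pop_lin d I cf (Gf L0 n x M) y) -sumrB.
   apply: ler_sum => i _. rewrite -mulrBr.
   case hs : (in_shell L0 n x M i y).
   - have hU := shell_U d L0 n x M i y hs.
     have hst := Gf_strict d L0 n x M i y hd hL0 hU.
     apply: le_trans (_ : cf i * (kap d / Lr L0 i.+1 ^+ 2) <= _); last by rewrite ler_wpM2l.
     rewrite hden LrS /cf.
     have h1 := Lr_ge1 L0 i hL0.
     have kne : kap d != 0 by rewrite gt_eqF.
     have tne : (3 : R) ^+ i != 0 by rewrite expf_neq0 //; lra.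
     have lne : Lr L0 i != 0 by rewrite gt_eqF //; lra.
     rewrite le_eqVlt; apply/orP; left; apply/eqP.
     rewrite (_ : ((true : nat)%:R : R) = 1) //. field. by rewrite kne tne lne.
   - rewrite (_ : ((false : nat)%:R : R) = 0) // mul0r. rewrite mulr_ge0 // subr_ge0. exact: Gf_super. }
 have hPf0 : forall y, 0 <= Pop f y by move=> y; apply: Pop_ge0.
 have hg0 : forall y, 0 <= g y.
 { move=> y. rewrite /g. have := hf0 y. have := mulr_ge0 (ltW heps) (hf0 y). lra. }
 have heps4 : eps <= 1/4.
 { have := ler_wpM2l (ltW heps) hB1. lra. }
 have hstep : forall y, exp (eps * V y) * Pop g y <= g y.
 { move=> y.
   have hv0 : 0 <= eps * V y by rewrite mulr_ge0 // ltW.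
   have hv1 : eps * V y <= 1/2.
   { have := ler_wpM2l (ltW heps) (hV y). lra. }
   have he := exp_le (eps * V y) hv0 hv1.
   have hPg : Pop g y = 1 + 4 * eps * Pop f y by rewrite /g Pop_affine.
   rewrite hPg.
   have hPgp : 0 <= 1 + 4 * eps * Pop f y.
   { have := mulr_ge0 (ltW heps) (hPf0 y). lra. }
   apply: le_trans (_ : (1 + 2 * (eps * V y)) * (1 + 4 * eps * Pop f y) <= _).
   { by rewrite ler_wpM2r. }
   apply: le_trans (_ : (1 + 2 * (eps * V y)) * (1 + 4 * eps * (f y - V y)) <= _).
   { apply: ler_wpM2l; first lra.
     have := ler_wpM2l (ltW heps) (hfV y). lra. }
   rewrite /g.
   have hFB : 4 * eps * f y <= 1.
   { have h4 : 0 <= 4 * eps by lra. have := ler_wpM2l h4 (hfB y). lra. }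
   have h1 : 0 <= (eps * V y) * (1 - 4 * eps * f y) by rewrite mulr_ge0 //; lra.
   have h2 : 0 <= (eps * V y) ^+ 2 by exact: sqr_ge0.
   lra. }
 have hly := lyap d (fun y => eps * V y) g hd0 hg0 hstep N z.
 apply: le_trans (_ : g z <= 2); last first.
 { rewrite /g. have := ler_wpM2l (ltW heps) (hfB z). lra. }
 apply: le_trans hly. rewrite /srw_E. apply: ler_sum => s _.
 have E : trunc_functional L0 n x M eps z N I s = exp (\sum_(k < N) eps * V (pos z s k)).
 { rewrite /trunc_functional. congr exp. rewrite -mulr_sumr. congr (eps * _).
   rewrite /V. under eq_bigr do rewrite /tau count_R mulr_suml.
   by rewrite exchange_big. }
 rewrite E. apply: ler_wpM2r; first by rewrite invr_ge0 ler0n.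
 apply: ler_peMr; first by apply: ltW; apply/RltP; exact: exp_pos.
 rewrite /g. have := mulr_ge0 (ltW heps) (hf0 (pos z s N)). lra.
Qed.


Local Close Scope ring_scope.

(* sup_z E_z[exp(eps sum_i tau_i/(L_i^2 3^i))] < oo, expressed as: there is C bounding
   all truncations (times < N, shells i < I); by monotone convergence E_z[...] is the
   supremum over N, I of these truncated expectations. *)
Theorem lemma5p5 (d : nat) (hd : 3 <= d) :
  exists eps : R, (0 < eps)%R /\
    forall (L0 n : nat) (x : pt d) (M : seq bool -> pt d),
      0 < L0 -> 0 < n -> in_lat L0 n x -> in_F x -> in_LambdaF L0 n x M ->
      exists C : R, forall (z : pt d) (N I : nat),
        (srw_E N (trunc_functional L0 n x M eps z N I) <= C)%R.
Proof. exact: main_aux. Qed.
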